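(* Let $b>0$, and let $\psi$ be the function defined in the context, with $\psi^{(k)}$ its $k$-th derivative. For every $k\in\mathbb{N}\cup\{0\}$ there exists a unique solution on $(c,\infty)$ of the equation $(x-c)\psi^{(k+1)}(x)-\psi^{(k)}(x)=0$. In particular, there exists a unique $x_0>c$ solving $(x-c)\psi'(x)-\psi(x)=0$ and a unique $x_\infty>c$ solving $(x-c)\psi''(x)-\psi'(x)=0$.
   Context: Constants: $a\in\mathbb{R}$, $b>0$, $\sigma>0$, $\rho>0$, $c>0$. For $\beta<0$, let $D_\beta(x)=\frac{e^{-x^2/4}}{\Gamma(-\beta)}\int_0^\infty t^{-\beta-1}e^{-t^2/2-xt}\,dt$ be the parabolic cylinder function of order $\beta$, and define $$\psi(x)=e^{\frac{(bx-a)^2}{2\sigma^2 b}}D_{-\rho/b}\Big(-\frac{bx-a}{\sigma b}\sqrt{2b}\Big),\qquad x\in\mathbb{R},$$ which is the positive, strictly increasing fundamental solution of $\frac12\sigma^2u''+(a-bx)u'-\rho u=0$. *)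

(* Defs.v *)
From Stdlib Require Import Reals.
From Coquelicot Require Import Coquelicot.
Open Scope R_scope.

Definition Gamma_fun (s : R) : R :=
  RInt_gen (fun t => Rpower t (s - 1) * exp (- t))
           (at_right 0) (Rbar_locally p_infty).

(* Parabolic cylinder function of order beta < 0:
   D_beta(x) = e^{-x^2/4}/Gamma(-beta) * int_0^oo t^{-beta-1} e^{-t^2/2 - x t} dt *)
Definition D_pc (beta x : R) : R :=
  exp (- x ^ 2 / 4) / Gamma_fun (- beta) *
  RInt_gen (fun t => Rpower t (- beta - 1) * exp (- t ^ 2 / 2 - x * t))
           (at_right 0) (Rbar_locally p_infty).

Definition psi (a b sigma rho : R) (x : R) : R :=
  exp ((b * x - a) ^ 2 / (2 * sigma ^ 2 * b)) *
  D_pc (- rho / b) (- (b * x - a) / (sigma * b) * sqrt (2 * b)).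

(* Main.v *)
Require Import Defs.
From Stdlib Require Import Reals Lra Psatz.
From Coquelicot Require Import Coquelicot.
Open Scope R_scope.

Lemma exp_mono x y : x <= y -> exp x <= exp y.
Proof. intros [H|H]; [left; apply exp_increasing; exact H| subst; lra]. Qed.

Lemma ln_le_xm1 t : 0 < t -> ln t <= t - 1.
Proof. intros Ht. pose proof (exp_ineq1_le (ln t)). rewrite exp_ln in H; lra. Qed.

Lemma exd_cont (f : R -> R) x : ex_derive f x -> continuous f x.
Proof. apply (ex_derive_continuous f). Qed.

Lemma Rpower_pos t p : 0 < Rpower t p.
Proof. unfold Rpower; apply exp_pos. Qed.

Lemma cont_Rpower t p : 0 < t -> continuous (fun x => Rpower x p) t.
Proof.
  intros Ht. apply (ex_derive_continuous (fun x => Rpower x p)). exists (p * Rpower t (p - 1)).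
  apply is_derive_Reals, derivable_pt_lim_power; exact Ht.
Qed.

Lemma cont_f p (phi : R -> R) t : 0 < t -> (forall t, continuous phi t) ->
  continuous (fun t => Rpower t p * exp (phi t)) t.
Proof.
  intros Ht Hphi. apply (continuous_mult (fun x => Rpower x p) (fun x => exp (phi x))).
  - apply cont_Rpower; exact Ht.
  - apply continuous_comp; [apply Hphi|]. apply exd_cont. auto_derive; auto.
Qed.

Section Gen.
Variables (p : R) (phi : R -> R) (A T : R).
Hypothesis hp : -1 < p.
Hypothesis hphi : forall t, continuous phi t.
Hypothesis hA : forall t, 0 < t -> phi t <= A.
Hypothesis hT : 1 <= T.
Hypothesis htail : forall t, T <= t -> p * ln t + phi t <= - t / 2.

Let f := fun t => Rpower t p * exp (phi t).

Lemma f_pos t : 0 < f t.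
Proof. unfold f. apply Rmult_lt_0_compat; [apply Rpower_pos|apply exp_pos]. Qed.

Lemma f_ex a b : 0 < a -> 0 < b -> ex_RInt f a b.
Proof.
  intros Ha Hb. apply (ex_RInt_continuous (V:=R_CompleteNormedModule)). intros z Hz. apply cont_f; auto.
  assert (0 < Rmin a b) by (apply Rmin_case; lra). lra.
Qed.

Lemma f_mono a' a b b' : 0 < a' -> a' <= a -> a <= b -> b <= b' ->
  RInt f a b <= RInt f a' b'.
Proof.
  intros H1 H2 H3 H4.
  rewrite <- (RInt_Chasles (V:=R_CompleteNormedModule) f a' a b') by (apply f_ex; lra).
  rewrite <- (RInt_Chasles (V:=R_CompleteNormedModule) f a b b') by (apply f_ex; lra).
  assert (0 <= RInt f a' a).
  { apply RInt_ge_0; auto. apply f_ex; lra. intros; left; apply f_pos. }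
  assert (0 <= RInt f b b').
  { apply RInt_ge_0; auto. apply f_ex; lra. intros; left; apply f_pos. }
  unfold plus; simpl. lra.
Qed.

Definition Mb := exp A * Rpower T (p + 1) / (p + 1) + 2.

Lemma f_bound a b : 0 < a -> a <= b -> RInt f a b <= Mb.
Proof.
  intros Ha Hab.
  set (a' := Rmin a T). set (b' := Rmax b T).
  assert (Ha' : 0 < a') by (unfold a'; apply Rmin_case; lra).
  assert (a' <= a) by apply Rmin_l. assert (b <= b') by apply Rmax_l.
  assert (a' <= T) by apply Rmin_r. assert (T <= b') by apply Rmax_r.
  apply Rle_trans with (RInt f a' b'); [apply f_mono; lra|].
  rewrite <- (RInt_Chasles (V:=R_CompleteNormedModule) f a' T b') by (apply f_ex; lra).
  unfold plus; simpl.
  assert (I1 : RInt f a' T <= exp A * Rpower T (p + 1) / (p + 1)).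
  { assert (E : is_RInt (fun t => exp A * Rpower t p) a' T
        (minus ((fun t => exp A / (p+1) * Rpower t (p+1)) T)
               ((fun t => exp A / (p+1) * Rpower t (p+1)) a'))).
    { apply (is_RInt_derive (V:=R_CompleteNormedModule) (fun t => exp A / (p+1) * Rpower t (p+1))).
      - intros x Hx. rewrite Rmin_left in Hx by lra.
        apply is_derive_Reals.
        replace (exp A * Rpower x p) with (exp A / (p + 1) * ((p + 1) * Rpower x (p + 1 - 1))).
        2:{ replace (p + 1 - 1) with p by ring. field. lra. }
        apply (derivable_pt_lim_scal (fun t => Rpower t (p+1))).
        apply derivable_pt_lim_power. lra.
      - intros x Hx. rewrite Rmin_left in Hx by lra.
        apply (continuous_mult (fun _ => exp A) (fun x => Rpower x p)).
        apply continuous_const. apply cont_Rpower. lra. }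
    apply (is_RInt_unique (V:=R_CompleteNormedModule)) in E.
    apply Rle_trans with (RInt (fun t => exp A * Rpower t p) a' T).
    { apply RInt_le; auto. apply f_ex; lra.
      eexists; apply (RInt_correct (V:=R_CompleteNormedModule)). apply (ex_RInt_continuous (V:=R_CompleteNormedModule)). intros z Hz.
      rewrite Rmin_left in Hz by lra.
      apply (continuous_mult (fun _ => exp A) (fun x => Rpower x p)).
      apply continuous_const. apply cont_Rpower. lra.
      intros x Hx. unfold f. rewrite (Rmult_comm (exp A)).
      apply Rmult_le_compat_l. left; apply Rpower_pos. apply exp_mono, hA; lra. }
    rewrite E. unfold minus, plus, opp; simpl.
    pose proof (Rpower_pos a' (p+1)). pose proof (exp_pos A).
    assert (0 < exp A / (p + 1) * Rpower a' (p + 1)).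
    { apply Rmult_lt_0_compat; [apply Rdiv_lt_0_compat|]; lra. }
    replace (exp A * Rpower T (p + 1) / (p + 1)) with (exp A / (p + 1) * Rpower T (p + 1)) by (field; lra).
    lra. }
  assert (I2 : RInt f T b' <= 2).
  { assert (E : is_RInt (fun t => exp (- t / 2)) T b'
        (minus ((fun t => -2 * exp (- t / 2)) b') ((fun t => -2 * exp (- t / 2)) T))).
    { apply (is_RInt_derive (V:=R_CompleteNormedModule) (fun t => -2 * exp (- t / 2))).
      - intros x Hx. auto_derive; auto. unfold Rdiv. set (u := exp _). change (-2 * (- (1) * / 2 * u) = u :> R). field.
      - intros x Hx. apply exd_cont. auto_derive; auto. }
    apply (is_RInt_unique (V:=R_CompleteNormedModule)) in E.
    apply Rle_trans with (RInt (fun t => exp (- t / 2)) T b').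
    { apply RInt_le; auto. apply f_ex; lra.
      eexists; apply (RInt_correct (V:=R_CompleteNormedModule)). apply (ex_RInt_continuous (V:=R_CompleteNormedModule)). intros z Hz.
      apply exd_cont. auto_derive; auto.
      intros x Hx. unfold f, Rpower. rewrite <- exp_plus. apply exp_mono, htail; lra. }
    rewrite E. unfold minus, plus, opp; simpl.
    pose proof (exp_pos (- b' / 2)). pose proof (exp_pos (- T / 2)).
    assert (exp (- T/2) <= 1). { rewrite <- exp_0. apply exp_mono. lra. }
    lra. }
  unfold Mb. lra.
Qed.

Lemma gen_exist : exists l, is_RInt_gen f (at_right 0) (Rbar_locally p_infty) l /\ 0 < l.
Proof.
  set (E := fun y => exists a b, 0 < a /\ a <= b /\ y = RInt f a b).
  assert (HB : bound E).
  { exists Mb. intros y (a & b & Ha & Hab & ->). apply f_bound; auto. }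
  assert (HE : exists y, E y) by (exists (RInt f 1 2); exists 1, 2; repeat split; lra).
  destruct (completeness E HB HE) as [l [Hub Hlub]].
  exists l. split.
  2:{ apply Rlt_le_trans with (RInt f 1 2).
      apply RInt_gt_0. lra. intros; apply f_pos. intros; apply cont_f; auto; lra.
      apply Hub. exists 1, 2; repeat split; lra. }
  unfold is_RInt_gen, filterlimi, filter_le, filtermapi.
  intros P [eps HP].
  assert (Hx : exists a0 b0, 0 < a0 /\ a0 <= b0 /\ l - eps < RInt f a0 b0).
  { apply Classical_Prop.NNPP. intros Hn.
    assert (l <= l - eps).
    { apply Hlub. intros y (a & b & Ha & Hab & ->).
      apply Rnot_lt_le. intros Hc. apply Hn. exists a, b; auto. }
    pose proof (cond_pos eps). lra. }
  destruct Hx as (a0 & b0 & Ha0 & Hab0 & Hl).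
  apply (Filter_prod _ _ _ (fun a => 0 < a < a0) (fun b => b0 < b)).
  - exists (mkposreal a0 Ha0). intros y Hy Hy0. simpl in Hy.
    unfold ball in Hy; simpl in Hy; unfold AbsRing_ball, abs, minus, plus, opp in Hy; simpl in Hy.
    apply Rabs_def2 in Hy. lra.
  - exists b0. auto.
  - intros a b [Ha Ha'] Hb. simpl. exists (RInt f a b). split.
    + apply (RInt_correct (V:=R_CompleteNormedModule)), f_ex; lra.
    + apply HP. unfold ball; simpl; unfold AbsRing_ball, abs, minus, plus, opp; simpl.
      assert (RInt f a b <= l) by (apply Hub; exists a, b; repeat split; lra).
      assert (RInt f a0 b0 <= RInt f a b) by (apply f_mono; lra).
      apply Rabs_def1; lra.
Qed.
End Gen.

Definition gz p z := fun t => Rpower t p * exp (- t ^ 2 / 2 - z * t).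
Definition Iz p z := RInt_gen (gz p z) (at_right 0) (Rbar_locally p_infty).

Lemma ln_ge0 t : 1 <= t -> 0 <= ln t.
Proof. intros H. rewrite <- ln_1. apply ln_le; lra. Qed.

Lemma Iz_ok p z : -1 < p ->
  is_RInt_gen (gz p z) (at_right 0) (Rbar_locally p_infty) (Iz p z) /\ 0 < Iz p z.
Proof.
  intros hp.
  assert (H1 : forall t, continuous (fun t => - t ^ 2 / 2 - z * t) t).
  { intros t. apply exd_cont. auto_derive; auto. }
  assert (H2 : forall t, 0 < t -> - t ^ 2 / 2 - z * t <= z ^ 2 / 2).
  { intros t _. pose proof (Rle_0_sqr (t + z)). unfold Rsqr in *. nra. }
  assert (H3 : 1 <= 2 * Rabs p + 2 * Rabs z + 2).
  { pose proof (Rabs_pos p); pose proof (Rabs_pos z); lra. }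
  assert (H4 : forall t, 2 * Rabs p + 2 * Rabs z + 2 <= t -> p * ln t + (- t ^ 2 / 2 - z * t) <= - t / 2).
  { intros t Ht. pose proof (Rabs_pos p); pose proof (Rabs_pos z).
    assert (0 < t) by lra.
    pose proof (ln_ge0 t ltac:(lra)). pose proof (ln_le_xm1 t H4).
    assert (p * ln t <= Rabs p * ln t).
    { apply Rmult_le_compat_r; auto. apply Rle_abs. }
    assert (- z * t <= Rabs z * t).
    { apply Rmult_le_compat_r; [lra|]. rewrite <- Rabs_Ropp. apply Rle_abs. }
    assert (Rabs p * ln t <= Rabs p * t) by (apply Rmult_le_compat_l; lra).
    nra. }
  destruct (gen_exist p (fun t => - t ^ 2 / 2 - z * t) (z ^ 2 / 2)
              (2 * Rabs p + 2 * Rabs z + 2) hp H1 H2 H3 H4) as [l [Hl Hpos]].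
  assert (E : Iz p z = l).
  { apply is_RInt_gen_unique. exact Hl. }
  rewrite E. split; auto.
Qed.

Lemma Gamma_pos s : 0 < s ->
  0 < RInt_gen (fun t => Rpower t (s - 1) * exp (- t)) (at_right 0) (Rbar_locally p_infty).
Proof.
  intros hs. set (q := Rabs (s - 1)).
  assert (H0 : -1 < s - 1) by lra.
  assert (H1 : forall t, continuous (fun t => - t) t).
  { intros t. apply exd_cont. auto_derive; auto. }
  assert (H2 : forall t, 0 < t -> - t <= 0) by (intros; lra).
  assert (Hq : 0 <= q) by apply Rabs_pos.
  assert (H3 : 1 <= (4 * q + 1) ^ 2) by nra.
  assert (H4 : forall t, (4 * q + 1) ^ 2 <= t -> (s - 1) * ln t + - t <= - t / 2).
  { intros t Ht.
    assert (1 <= t) by nra. assert (0 < t) by lra.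
    assert (Hs : 4 * q + 1 <= sqrt t).
    { rewrite <- (sqrt_pow2 (4 * q + 1)) by lra. apply sqrt_le_1_alt; lra. }
    assert (Hst : sqrt t * sqrt t = t) by (apply sqrt_sqrt; lra).
    assert (Hsp : 0 < sqrt t) by lra.
    assert (Hl2 : ln t = 2 * ln (sqrt t)).
    { rewrite <- Hst at 1. rewrite ln_mult by lra. ring. }
    pose proof (ln_le_xm1 (sqrt t) Hsp).
    pose proof (ln_ge0 t H).
    assert ((s - 1) * ln t <= q * ln t).
    { apply Rmult_le_compat_r; auto. apply Rle_abs. }
    assert (q * ln t <= q * (2 * sqrt t)) by (apply Rmult_le_compat_l; lra).
    nra. }
  destruct (gen_exist (s - 1) (fun t => - t) 0 ((4 * q + 1) ^ 2) H0 H1 H2 H3 H4) as [l [Hl Hpos]].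
  rewrite (is_RInt_gen_unique _ _ Hl). exact Hpos.
Qed.

Lemma exp_taylor x : Rabs (exp x - 1 - x) <= x ^ 2 * exp (Rabs x).
Proof.
  pose proof (exp_ineq1_le x) as e1. pose proof (exp_ineq1_le (- x)) as e2.
  assert (em : exp x * exp (- x) = 1) by (rewrite <- exp_plus; replace (x + - x) with 0 by ring; apply exp_0).
  pose proof (exp_pos x). pose proof (exp_pos (-x)).
  assert (u : exp x * (1 - x) <= 1).
  { rewrite <- em. apply Rmult_le_compat_l; lra. }
  assert (h1 : exp x - 1 - x <= x * (exp x - 1)) by nra.
  rewrite Rabs_right by lra.
  destruct (Rle_or_lt 0 x) as [Hx|Hx].
  - rewrite Rabs_right by lra. nra.
  - rewrite Rabs_left by lra.
    assert (1 <= exp (- x)) by (rewrite <- exp_0; apply exp_mono; lra).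
    assert (x * (exp x - 1) <= x ^ 2) by nra.
    nra.
Qed.

Lemma fp_pos : filter_prod (at_right 0) (Rbar_locally p_infty)
  (fun ab => 0 < fst ab /\ fst ab <= snd ab).
Proof.
  apply (Filter_prod _ _ _ (fun a => 0 < a < 1) (fun b => 1 < b)).
  - exists (mkposreal 1 Rlt_0_1). intros y Hy Hy0. simpl in Hy.
    unfold ball in Hy; simpl in Hy; unfold AbsRing_ball, abs, minus, plus, opp in Hy; simpl in Hy.
    apply Rabs_def2 in Hy. lra.
  - exists 1. auto.
  - intros a b Ha Hb. simpl. lra.
Qed.

Lemma Iz_derive p z : -1 < p -> is_derive (Iz p) z (- Iz (p + 1) z).
Proof.
  intros hp.
  assert (Hrest : forall h, Rabs h <= 1 ->
     Rabs (Iz p (z + h) - Iz p z + h * Iz (p + 1) z) <= h ^ 2 * Iz (p + 2) (z - 1)).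
  { intros h Hh.
    destruct (Iz_ok p (z + h) hp) as [I1 _].
    destruct (Iz_ok p z hp) as [I2 _].
    destruct (Iz_ok (p + 1) z ltac:(lra)) as [I3 _].
    destruct (Iz_ok (p + 2) (z - 1) ltac:(lra)) as [I4 _].
    pose proof (is_RInt_gen_plus _ _ _ _ (is_RInt_gen_minus _ _ _ _ I1 I2) (is_RInt_gen_scal _ h _ I3)) as J.
    pose proof (is_RInt_gen_scal _ (h ^ 2) _ I4) as K.
    refine (RInt_gen_norm _ _ _ _ _ _ J K).
    - apply (filter_imp _ _ (fun ab H => proj2 H) fp_pos).
    - apply (filter_imp (fun ab => 0 < fst ab /\ fst ab <= snd ab)); [|exact fp_pos].
      intros [a b] [Ha Hab] x Hx. simpl in *.
      assert (Hx0 : 0 < x) by lra.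
      change (Rabs (gz p (z + h) x - gz p z x + h * gz (p + 1) z x) <= h ^ 2 * gz (p + 2) (z - 1) x).
      unfold gz.
      set (R0 := Rpower x p * exp (- x ^ 2 / 2 - z * x)).
      assert (E1 : Rpower x p * exp (- x ^ 2 / 2 - (z + h) * x) = R0 * exp (- h * x)).
      { unfold R0. rewrite Rmult_assoc, <- exp_plus. do 2 f_equal. ring. }
      assert (E2 : Rpower x (p + 1) * exp (- x ^ 2 / 2 - z * x) = R0 * x).
      { unfold R0. rewrite Rpower_plus, Rpower_1 by lra. ring. }
      assert (E3 : Rpower x (p + 2) * exp (- x ^ 2 / 2 - (z - 1) * x) = R0 * x ^ 2 * exp x).
      { unfold R0. replace (p + 2) with ((p + 1) + 1) by ring.
        rewrite !Rpower_plus, Rpower_1 by lra.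
        replace (- x ^ 2 / 2 - (z - 1) * x) with ((- x ^ 2 / 2 - z * x) + x) by ring.
        rewrite exp_plus. ring. }
      rewrite E1, E2, E3.
      replace (R0 * exp (- h * x) - R0 + h * (R0 * x)) with (R0 * (exp (- h * x) - 1 - (- h * x))) by ring.
      assert (HR0 : 0 < R0) by (unfold R0; apply Rmult_lt_0_compat; [apply Rpower_pos|apply exp_pos]).
      rewrite Rabs_mult, (Rabs_right R0) by lra.
      pose proof (exp_taylor (- h * x)).
      assert (exp (Rabs (- h * x)) <= exp x).
      { apply exp_mono. rewrite Rabs_mult, (Rabs_right x) by lra. rewrite Rabs_Ropp. nra. }
      assert (0 <= (- h * x) ^ 2) by nra.
      assert ((- h * x) ^ 2 * exp (Rabs (- h * x)) <= (- h * x) ^ 2 * exp x) by (apply Rmult_le_compat_l; lra).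
      assert (Rabs (exp (- h * x) - 1 - - h * x) <= h ^ 2 * x ^ 2 * exp x) by (replace (h ^ 2 * x ^ 2) with ((- h * x) ^ 2) by ring; lra).
      replace (h ^ 2 * (R0 * x ^ 2 * exp x)) with (R0 * (h ^ 2 * x ^ 2 * exp x)) by ring.
      apply Rmult_le_compat_l; lra. }
  apply is_derive_Reals. intros eps Heps.
  destruct (Iz_ok (p + 2) (z - 1) ltac:(lra)) as [_ HM].
  set (M := Iz (p + 2) (z - 1)) in *.
  assert (Hd : 0 < Rmin 1 (eps / (M + 1))).
  { apply Rmin_case; [lra|]. apply Rdiv_lt_0_compat; lra. }
  exists (mkposreal _ Hd). intros h Hh0 Hh. simpl in Hh.
  assert (Hh1 : Rabs h <= 1) by (pose proof (Rmin_l 1 (eps / (M + 1))); lra).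
  assert (Hh2 : Rabs h < eps / (M + 1)) by (pose proof (Rmin_r 1 (eps / (M + 1))); lra).
  specialize (Hrest h Hh1).
  replace ((Iz p (z + h) - Iz p z) / h - - Iz (p + 1) z) with
     ((Iz p (z + h) - Iz p z + h * Iz (p + 1) z) / h) by (field; auto).
  assert (Ha : 0 < Rabs h) by (apply Rabs_pos_lt; auto).
  unfold Rdiv. rewrite Rabs_mult, Rabs_inv.
  apply Rle_lt_trans with (h ^ 2 * M * / Rabs h).
  { apply Rmult_le_compat_r; [left; apply Rinv_0_lt_compat; auto| auto]. }
  replace (h ^ 2) with (Rabs h * Rabs h) by (rewrite <- Rabs_mult, Rabs_right by nra; ring).
  replace (Rabs h * Rabs h * M * / Rabs h) with (Rabs h * M) by (field; lra).
  apply Rmult_lt_reg_r with (/ (M + 1)) in Hh2 || idtac.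
  assert (Rabs h * (M + 1) < eps).
  { apply Rmult_lt_reg_r with (/ (M + 1)). apply Rinv_0_lt_compat; lra.
    rewrite Rmult_assoc, Rinv_r by lra. lra. }
  nra.
Qed.

Lemma final_gen (f : nat -> R -> R) (c : R) (k : nat) :
  (forall n x, is_derive (f n) x (f (S n) x)) -> (forall n x, 0 < f n x) ->
  exists! x, c < x /\ (x - c) * f (S k) x - f k x = 0.
Proof.
  intros HD HP.
  assert (HD' : forall n x, derivable_pt_lim (f n) x (f (S n) x)).
  { intros n x. apply is_derive_Reals, HD. }
  set (g := fun x => (x - c) * f (S k) x - f k x).
  assert (Hg : forall x, derivable_pt_lim g x ((x - c) * f (S (S k)) x)).
  { intros x.
    assert (A : derivable_pt_lim (fun x => x - c) x 1).
    { apply is_derive_Reals. auto_derive; auto. }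
    pose proof (derivable_pt_lim_mult (fun x => x - c) (f (S k)) x 1 (f (S (S k)) x) A (HD' _ x)) as H1.
    pose proof (derivable_pt_lim_minus _ (f k) x _ _ H1 (HD' k x)) as H2.
    replace ((x - c) * f (S (S k)) x) with (1 * f (S k) x + (x - c) * f (S (S k)) x - f (S k) x) by ring.
    exact H2. }
  assert (Hinc : forall x y, c <= x -> x < y -> g x < g y).
  { intros x y Hx Hxy.
    destruct (MVT_cor2 g (fun x => (x - c) * f (S (S k)) x) x y Hxy (fun t _ => Hg t)) as [xi [E Hxi]].
    assert (0 < (xi - c) * f (S (S k)) xi) by (apply Rmult_lt_0_compat; [lra|apply HP]).
    assert (0 < (xi - c) * f (S (S k)) xi * (y - x)) by (apply Rmult_lt_0_compat; lra).
    lra. }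
  assert (Hf2 : forall x y, x < y -> f (S (S k)) x < f (S (S k)) y).
  { intros x y Hxy.
    destruct (MVT_cor2 (f (S (S k))) (f (S (S (S k)))) x y Hxy (fun t _ => HD' _ t)) as [xi [E Hxi]].
    assert (0 < f (S (S (S k))) xi * (y - x)) by (apply Rmult_lt_0_compat; [apply HP|lra]).
    lra. }
  set (x1 := c + 1).
  assert (Hp2 := HP (S (S k)) x1). assert (Hp0 := HP k x1). assert (Hp1 := HP (S k) x1).
  set (L := (f k x1 + 1) / f (S (S k)) x1).
  assert (HL : 0 < L) by (apply Rdiv_lt_0_compat; lra).
  set (y := x1 + L).
  assert (Hgy : 0 < g y).
  { destruct (MVT_cor2 g (fun x => (x - c) * f (S (S k)) x) x1 y ltac:(unfold y; lra) (fun t _ => Hg t)) as [xi [E Hxi]].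
    assert (f (S (S k)) x1 < f (S (S k)) xi) by (apply Hf2; lra).
    assert (f (S (S k)) x1 <= (xi - c) * f (S (S k)) xi).
    { unfold x1 in *. nra. }
    assert (Ey : y - x1 = L) by (unfold y; ring).
    rewrite Ey in E.
    assert (f (S (S k)) x1 * L = f k x1 + 1) by (unfold L; field; lra).
    assert (f (S (S k)) x1 * L <= (xi - c) * f (S (S k)) xi * L) by (apply Rmult_le_compat_r; lra).
    assert (g x1 = 1 * f (S k) x1 - f k x1) by (unfold g, x1; ring).
    lra. }
  assert (Hgc : g c < 0) by (unfold g; pose proof (HP k c); lra).
  assert (Hcont : continuity g).
  { intros x. apply (derivable_continuous_pt g x (exist _ _ (Hg x))). }
  destruct (IVT g c y Hcont ltac:(unfold y, x1; lra) Hgc Hgy) as [z [Hz Hgz]].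
  assert (Hcz : c < z) by (destruct Hz as [[Hz|Hz] _]; [auto| subst z; lra]).
  exists z. split; [split; [exact Hcz| exact Hgz]|].
  intros w [Hw Hgw]. change (g w = 0) in Hgw.
  destruct (Rtotal_order z w) as [H|[H|H]]; auto.
  - pose proof (Hinc z w ltac:(lra) H). lra.
  - pose proof (Hinc w z ltac:(lra) H). lra.
Qed.

Section Psi.
Variables (a b sigma rho : R).
Hypotheses (hb : 0 < b) (hsigma : 0 < sigma) (hrho : 0 < rho).

Let nu := - (- rho / b).
Let p0 := - (- rho / b) - 1.
Let lam := sqrt (2 * b) / sigma.
Let zf := fun x => - (b * x - a) / (sigma * b) * sqrt (2 * b).
Let K := / Gamma_fun nu.

Lemma K_pos : 0 < K.
Proof.
  unfold K. apply Rinv_0_lt_compat. unfold Gamma_fun. apply Gamma_pos.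
  unfold nu. apply Ropp_0_gt_lt_contravar. unfold Rdiv.
  rewrite Ropp_mult_distr_l_reverse. apply Ropp_lt_gt_0_contravar.
  apply Rmult_lt_0_compat; auto. apply Rinv_0_lt_compat; auto.
Qed.

Lemma lam_pos : 0 < lam.
Proof. unfold lam. apply Rdiv_lt_0_compat; auto. apply sqrt_lt_R0; lra. Qed.

Lemma psi_eq x : psi a b sigma rho x = K * Iz p0 (zf x).
Proof.
  change (psi a b sigma rho x) with
    (exp ((b * x - a) ^ 2 / (2 * sigma ^ 2 * b)) *
     (exp (- (zf x) ^ 2 / 4) / Gamma_fun nu * Iz p0 (zf x))).
  assert (Hs : sqrt (2 * b) * sqrt (2 * b) = 2 * b) by (apply sqrt_sqrt; lra).
  assert (E : (zf x) ^ 2 / 4 = (b * x - a) ^ 2 / (2 * sigma ^ 2 * b)).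
  { unfold zf.
    replace ((- (b * x - a) / (sigma * b) * sqrt (2 * b)) ^ 2) with
      ((b * x - a) ^ 2 / (sigma * b) ^ 2 * (sqrt (2 * b) * sqrt (2 * b))) by (field; lra).
    rewrite Hs. field. lra. }
  replace (- zf x ^ 2 / 4) with (- ((b * x - a) ^ 2 / (2 * sigma ^ 2 * b))) by (rewrite <- E; field).
  set (u := (b * x - a) ^ 2 / (2 * sigma ^ 2 * b)).
  assert (exp u * exp (- u) = 1) by (rewrite <- exp_plus; replace (u + - u) with 0 by ring; apply exp_0).
  unfold K, Rdiv. transitivity ((exp u * exp (- u)) * / Gamma_fun nu * Iz p0 (zf x)); [ring|].
  rewrite H. ring.
Qed.

Lemma zf_derive x : is_derive zf x (- lam).
Proof.
  unfold zf, lam. auto_derive; auto. field. lra.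
Qed.

Lemma L1 n x : is_derive (fun y => K * lam ^ n * Iz (p0 + INR n) (zf y)) x
   (K * lam ^ (S n) * Iz (p0 + INR (S n)) (zf x)).
Proof.
  assert (hq : -1 < p0 + INR n).
  { pose proof (pos_INR n). unfold p0.
    assert (0 < rho / b) by (apply Rdiv_lt_0_compat; auto).
    unfold Rdiv in *. lra. }
  assert (D1 : is_derive (fun y => Iz (p0 + INR n) (zf y)) x (scal (- lam) (- Iz (p0 + INR n + 1) (zf x)))).
  { apply (is_derive_comp (Iz (p0 + INR n)) zf). apply Iz_derive; auto. apply zf_derive. }
  pose proof (is_derive_scal _ x (K * lam ^ n) _ D1) as D2.
  rewrite S_INR. rewrite <- Rplus_assoc.
  replace (K * lam ^ S n * Iz (p0 + INR n + 1) (zf x)) with (K * lam ^ n * scal (- lam) (- Iz (p0 + INR n + 1) (zf x))).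
  2:{ change (scal (- lam) (- Iz (p0 + INR n + 1) (zf x))) with ((- lam) * (- Iz (p0 + INR n + 1) (zf x))). simpl; ring. }
  exact D2.
Qed.

Lemma Dn_formula n x : Derive_n (psi a b sigma rho) n x = K * lam ^ n * Iz (p0 + INR n) (zf x).
Proof.
  revert x; induction n; intros x.
  - simpl. rewrite psi_eq. rewrite Rplus_0_r. ring.
  - simpl Derive_n. rewrite (Derive_ext _ _ x IHn). apply is_derive_unique. apply L1.
Qed.

Lemma Dn_derive n x : is_derive (Derive_n (psi a b sigma rho) n) x (Derive_n (psi a b sigma rho) (S n) x).
Proof.
  rewrite Dn_formula. apply (is_derive_ext (fun y => K * lam ^ n * Iz (p0 + INR n) (zf y))).
  { intros t. symmetry; apply Dn_formula. }
  apply L1.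
Qed.

Lemma Dn_pos n x : 0 < Derive_n (psi a b sigma rho) n x.
Proof.
  rewrite Dn_formula. apply Rmult_lt_0_compat; [apply Rmult_lt_0_compat|].
  - apply K_pos.
  - apply pow_lt, lam_pos.
  - apply Iz_ok. pose proof (pos_INR n). unfold p0.
    assert (0 < rho / b) by (apply Rdiv_lt_0_compat; auto).
    unfold Rdiv in *. lra.
Qed.
End Psi.

Theorem lemma4p4 (a b sigma rho c : R)
  (hb : 0 < b) (hsigma : 0 < sigma) (hrho : 0 < rho) (hc : 0 < c) :
  forall k : nat,
    exists! x : R, c < x /\
      (x - c) * Derive_n (psi a b sigma rho) (S k) x
        - Derive_n (psi a b sigma rho) k x = 0.
Proof.
  intros k. apply (final_gen (fun n => Derive_n (psi a b sigma rho) n) c k).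
  - intros n x. apply Dn_derive; auto.
  - intros n x. apply Dn_pos; auto.
Qed.
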